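(* Let $K$ be a $p$-adic field. Then for each positive integer $n$ there exists a totally ramified field extension $L\geq K$ of degree $pn$ such that no compatible system of angular component maps on $L$ restricts to a compatible system of angular component maps on $K$.
   Context: A $p$-adic field is a finite extension of $\mathbb{Q}_p$. For a valued field $K$ with valuation ring $\mathcal{O}_K$ and maximal ideal $\mathcal{M}_K$ and $N\ge1$, let $R_N=\mathcal{O}_K/(N\mathcal{M}_K)$. An angular component map $\mathrm{ac}_N\colon K\to R_N$ is a multiplicative homomorphism $K^\times\to R_N^\times$ whose restriction to $\mathcal{O}_K^\times$ is the natural projection, extended by $\mathrm{ac}_N(0)=0$; a family $(\mathrm{ac}_N)_{N\ge1}$ is a compatible system if it commutes with the projections $R_{NM}\to R_N$. A system on $L$ restricts to one on $K$ if $\mathrm{ac}_N(K)\subseteq\mathcal{O}_K/(N\mathcal{M}_K)\subseteq\mathcal{O}_L/(N\mathcal{M}_L)$ for all $N$ (so that the restrictions are angular component maps on $K$). *)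

(* Defs.v *)
From HB Require Import structures.
From mathcomp Require Import all_boot all_order all_algebra all_field.
Set Implicit Arguments. Unset Strict Implicit. Unset Printing Implicit Defensive.
Import Order.TTheory GRing.Theory Num.Theory.
Local Open Scope ring_scope.

Section Valued.
Variable F : fieldType.

(* A normalized discrete valuation v : F^x ->> Z (the value at 0 is junk;
   0 is treated as having valuation +oo everywhere below). *)
Definition is_dval (v : F -> int) : Prop :=
  [/\ (forall x y : F, x != 0 -> y != 0 -> v (x * y) = v x + v y),
      (forall x y : F, x != 0 -> y != 0 -> x + y != 0 ->
          Num.min (v x) (v y) <= v (x + y)) &
      (exists x : F, x != 0 /\ v x = 1)].

Definition vge (v : F -> int) (k : int) (x : F) : bool := (x == 0) || (k <= v x).

Definition in_O (v : F -> int) (x : F) : bool := vge v 0 x.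

Definition dv_complete (v : F -> int) : Prop :=
  forall a : nat -> F,
    (forall k : int, exists N : nat, forall m n : nat,
        (N <= m)%N -> (N <= n)%N -> vge v k (a m - a n)) ->
    exists l : F, forall k : int, exists N : nat, forall n : nat,
        (N <= n)%N -> vge v k (a n - l).

(* A p-adic field (finite extension of Q_p), characterized as a complete
   discretely valued field of characteristic 0 whose residue field is finite
   of characteristic p. *)
Definition padic_field (p : nat) (v : F -> int) : Prop :=
  [/\ prime p, is_dval v, dv_complete v,
      (forall m : nat, (0 < m)%N -> m%:R != 0 :> F) /\ 0 < v p%:R &
      (exists s : seq F, forall x : F, in_O v x ->
          exists2 y, y \in s & vge v 1 (x - y))].

(* a = b in R_N = O_F / (N M_F), i.e. a - b in N M_F = {x | v x >= v N + 1} *)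
Definition cong (v : F -> int) (N : nat) (a b : F) : bool :=
  vge v (v N%:R + 1) (a - b).

(* ac : F -> R_N, represented by representatives in O_F. *)
Definition is_ac (v : F -> int) (N : nat) (ac : F -> F) : Prop :=
  [/\ (forall x, in_O v (ac x)),
      (forall x, x != 0 -> exists u, in_O v u /\ cong v N (ac x * u) 1),
      (forall x y, x != 0 -> y != 0 -> cong v N (ac (x * y)) (ac x * ac y)),
      (forall x, x != 0 -> v x = 0 -> cong v N (ac x) x) &
      cong v N (ac 0) 0].

Definition compatible_ac (v : F -> int) (ac : nat -> F -> F) : Prop :=
  (forall N, (0 < N)%N -> is_ac v N (ac N)) /\
  (forall N M x, (0 < N)%N -> (0 < M)%N -> cong v N (ac (N * M)%N x) (ac N x)).

End Valued.

(* A system on L restricts to K : ac_N(K) lies in O_K/(N M_K) inside O_L/(N M_L). *)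
Definition restricts (K : fieldType) (L : fieldExtType K)
    (v : K -> int) (w : L -> int) (ac : nat -> L -> L) : Prop :=
  forall N : nat, (0 < N)%N -> forall x : K,
    exists y : K, in_O v y /\ cong w N (ac N (x%:A)) (y%:A).

(* Main.v *)
Require Import Defs.
From HB Require Import structures.
From mathcomp Require Import all_boot all_order all_algebra all_field.
From mathcomp Require Import zify ring.
Import Order.TTheory GRing.Theory Num.Theory.
Import Pdiv.Ring Pdiv.RingMonic.
Set Implicit Arguments. Unset Strict Implicit. Unset Printing Implicit Defensive.
Local Open Scope ring_scope.


Section VLemmas.
Variable F : fieldType.
Variable v : F -> int.
Hypothesis hv : is_dval v.

Lemma vM (x y : F) : x != 0 -> y != 0 -> v (x * y) = v x + v y.
Proof. by case: hv => H _ _; apply: H. Qed.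

Lemma v1 : v 1 = 0.
Proof. have := @vM 1 1 (oner_neq0 _) (oner_neq0 _); rewrite mulr1 => H; lia. Qed.

Lemma vN1 : v (-1) = 0.
Proof.
have n1 : (-1 : F) != 0 by rewrite oppr_eq0 oner_neq0.
have := @vM _ _ n1 n1; rewrite mulrNN mulr1 v1 => H; lia.
Qed.

Lemma vN (x : F) : x != 0 -> v (- x) = v x.
Proof.
move=> x0; have n1 : (-1 : F) != 0 by rewrite oppr_eq0 oner_neq0.
by rewrite -mulN1r vM // vN1 add0r.
Qed.

Lemma vD (k : int) (x y : F) : x != 0 -> y != 0 -> x + y != 0 ->
  k <= v x -> k <= v y -> k <= v (x + y).
Proof.
case: hv => _ H _ x0 y0 xy0 kx ky; have := H x y x0 y0 xy0.
rewrite /Num.min; case: ifP => _ H'; lia.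
Qed.

Lemma vgeD k (a b : F) : vge v k a -> vge v k b -> vge v k (a + b).
Proof.
rewrite /vge; have [->|a0] := eqVneq a 0; first by rewrite add0r.
have [->|b0] := eqVneq b 0; first by rewrite addr0 => /= H _; rewrite H orbT.
have [->|ab0] := eqVneq (a + b) 0; first by [].
move=> /= ka kb; exact: vD.
Qed.

Lemma vgeN k (a : F) : vge v k a -> vge v k (- a).
Proof.
rewrite /vge oppr_eq0; case: (eqVneq a 0) => //= a0; rewrite vN //.
Qed.

Lemma vgeB k (a b : F) : vge v k a -> vge v k b -> vge v k (a - b).
Proof. by move=> ha hb; apply: vgeD => //; apply: vgeN. Qed.

Lemma vgeM k1 k2 (a b : F) : vge v k1 a -> vge v k2 b -> vge v (k1 + k2) (a * b).
Proof.
rewrite /vge mulf_eq0; case: (eqVneq a 0) => //= a0; case: (eqVneq b 0) => //= b0.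
rewrite vM // => ??; lia.
Qed.

Lemma vge_le k1 k2 (a : F) : k1 <= k2 -> vge v k2 a -> vge v k1 a.
Proof. rewrite /vge; case: (a == 0) => //= ??; lia. Qed.

Lemma vge0 k : vge v k 0.
Proof. by rewrite /vge eqxx. Qed.

Lemma vge1 : vge v 0 1.
Proof. by rewrite /vge v1 orbT. Qed.

Lemma vgeX k (a : F) i : vge v k a -> 0 <= k -> vge v (k * i%:Z) (a ^+ i).
Proof.
move=> ha k0; elim: i => [|i IH]; first by rewrite expr0 mulr0; exact: vge1.
rewrite exprS; have -> : k * (i.+1)%:Z = k + k * i%:Z by lia.
exact: vgeM.
Qed.

Lemma vge_nat m : vge v 0 (m%:R).
Proof.
elim: m => [|m IH]; first exact: vge0.
by rewrite mulrS; apply: vgeD => //; apply: vge1.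
Qed.

Lemma vge_sum k (I : Type) (r : seq I) (P : pred I) (f : I -> F) :
  (forall i, P i -> vge v k (f i)) -> vge v k (\sum_(i <- r | P i) f i).
Proof. move=> H; apply: (big_ind (vge v k)) => //; [exact: vge0 | exact: vgeD]. Qed.

End VLemmas.


Lemma modeq_uniq (e : nat) (a b : int) (i j : nat) : (i < e)%N -> (j < e)%N ->
  e%:Z * a + i%:Z = e%:Z * b + j%:Z -> i = j.
Proof.
move=> ie je H.
have ab : a = b.
  have [ab|ab] := leP a b.
  - have [ab'|ab'] := leP b a; first lia.
    have : e%:Z * (b - a) >= e%:Z by nia.
    lia.
  - have : e%:Z * (a - b) >= e%:Z by nia.
    lia.
subst b; lia.
Qed.

Lemma min_cases (x y : int) : (Num.min x y = x /\ x <= y) \/ (Num.min x y = y /\ y <= x).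
Proof.
rewrite /Num.Def.minr; case: ifP => H; first by left; split => //; rewrite ltW.
by right; split => //; rewrite leNgt H.
Qed.

Section Weights.
Variable F : fieldType.
Variable v : F -> int.
Hypothesis hv : is_dval v.
Variable e : nat.
Hypothesis he : (0 < e)%N.
Variable pi : F.
Hypothesis pi0 : pi != 0.
Hypothesis vpi : v pi = 1.

Definition G (W : int) (c : F) (k : nat) : bool := (c == 0) || (W <= e%:Z * v c + k%:Z).
Definition S (W : int) (c : F) (k : nat) : bool := (c == 0) || (W < e%:Z * v c + k%:Z).
Definition E (W : int) (c : F) (k : nat) : bool := (c != 0) && (W == e%:Z * v c + k%:Z).

Lemma S_G W c k : S W c k -> G W c k.
Proof. rewrite /S /G; case: (c == 0) => //= ?; lia. Qed.

Lemma G0 W k : G W 0 k. Proof. by rewrite /G eqxx. Qed.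
Lemma S0 W k : S W 0 k. Proof. by rewrite /S eqxx. Qed.

Lemma G_add W (a b : F) k : G W a k -> G W b k -> G W (a + b) k.
Proof.
rewrite /G; have [->|a0] := eqVneq a 0; first by rewrite add0r.
have [->|b0] := eqVneq b 0; first by rewrite addr0 => /= H _; rewrite H orbT.
have [->|ab0] := eqVneq (a + b) 0; first by [].
move=> /= ha hb.
pose m := Num.min (v a) (v b).
have hm : m <= v (a + b) by apply: (vD hv) => //; rewrite /m; case: (min_cases (v a) (v b)) => [[-> ?]|[-> ?]]; lia.
have : W <= e%:Z * m + k%:Z by rewrite /m; case: (min_cases (v a) (v b)) => [[-> ?]|[-> ?]]; lia.
nia.
Qed.

Lemma S_add W (a b : F) k : S W a k -> S W b k -> S W (a + b) k.
Proof.
rewrite /S; have [->|a0] := eqVneq a 0; first by rewrite add0r.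
have [->|b0] := eqVneq b 0; first by rewrite addr0 => /= H _; rewrite H orbT.
have [->|ab0] := eqVneq (a + b) 0; first by [].
move=> /= ha hb.
pose m := Num.min (v a) (v b).
have hm : m <= v (a + b) by apply: (vD hv) => //; rewrite /m; case: (min_cases (v a) (v b)) => [[-> ?]|[-> ?]]; lia.
have : W < e%:Z * m + k%:Z by rewrite /m; case: (min_cases (v a) (v b)) => [[-> ?]|[-> ?]]; lia.
nia.
Qed.

Lemma G_sum W k (I : Type) (r : seq I) (P : pred I) (f : I -> F) :
  (forall i, P i -> G W (f i) k) -> G W (\sum_(i <- r | P i) f i) k.
Proof. move=> H; apply: (big_ind (fun c => G W c k)) => //; [exact: G0 | move=> x y; exact: G_add]. Qed.

Lemma S_sum W k (I : Type) (r : seq I) (P : pred I) (f : I -> F) :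
  (forall i, P i -> S W (f i) k) -> S W (\sum_(i <- r | P i) f i) k.
Proof. move=> H; apply: (big_ind (fun c => S W c k)) => //; [exact: S0 | move=> x y; exact: S_add]. Qed.

Lemma G_mul W1 W2 a b i j : G W1 a i -> G W2 b j -> G (W1 + W2) (a * b) (i + j).
Proof.
rewrite /G mulf_eq0; have [a0|a0] := eqVneq a 0 => //=; have [b0|b0] := eqVneq b 0 => //=.
rewrite (vM hv) // => ??; lia.
Qed.

Lemma S_mulG W1 W2 a b i j : S W1 a i -> G W2 b j -> S (W1 + W2) (a * b) (i + j).
Proof.
rewrite /G /S mulf_eq0; have [a0|a0] := eqVneq a 0 => //=; have [b0|b0] := eqVneq b 0 => //=.
rewrite (vM hv) // => ??; lia.
Qed.

Lemma G_mulS W1 W2 a b i j : G W1 a i -> S W2 b j -> S (W1 + W2) (a * b) (i + j).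
Proof.
rewrite /G /S mulf_eq0; have [a0|a0] := eqVneq a 0 => //=; have [b0|b0] := eqVneq b 0 => //=.
rewrite (vM hv) // => ??; lia.
Qed.

Lemma E_mul W1 W2 a b i j : E W1 a i -> E W2 b j -> E (W1 + W2) (a * b) (i + j).
Proof.
rewrite /E mulf_eq0; have [a0|a0] := eqVneq a 0 => //=; have [b0|b0] := eqVneq b 0 => //=.
rewrite (vM hv) // => /eqP ? /eqP ?; apply/eqP; lia.
Qed.

Lemma E_addS W a b k : E W a k -> S W b k -> E W (a + b) k.
Proof.
rewrite /E /S; have [a0|a0] := eqVneq a 0 => //=.
have [->|b0] := eqVneq b 0; first by rewrite addr0 a0.
move=> /= /eqP ha hb.
have vab : v a < v b by nia.
have ab0 : a + b != 0.
  apply/negP => /eqP ab; have bE : b = - a by apply/eqP; rewrite -addr_eq0 addrC ab.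
  move: vab; rewrite bE (vN hv) //; lia.
rewrite ab0 /=; apply/eqP.
have h1 : v a <= v (a + b) by apply: (vD hv) => //; lia.
have h2 : v (a + b) <= v a.
  have : v a >= Num.min (v (a + b)) (v (- b)).
    case: hv => _ H _; have := H (a + b) (- b) ab0; rewrite oppr_eq0 addrK; apply => //.
  rewrite (vN hv) //; case: (min_cases (v (a + b)) (v b)) => [[-> ?]|[-> ?]]; lia.
have -> : v (a + b) = v a by lia.
lia.
Qed.

Lemma G_shift W c j k : (j = k + e)%N -> G W c j -> G W (pi * c) k.
Proof.
move=> ->; rewrite /G mulf_eq0 (negbTE pi0) /=; have [c0|c0] := eqVneq c 0 => //=.
rewrite (vM hv) // vpi => ?; lia.
Qed.

Lemma S_shift W c j k : (j = k + e)%N -> S W c j -> S W (pi * c) k.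
Proof.
move=> ->; rewrite /S mulf_eq0 (negbTE pi0) /=; have [c0|c0] := eqVneq c 0 => //=.
rewrite (vM hv) // vpi => ?; lia.
Qed.

Lemma E_shift W c j k : (j = k + e)%N -> E W c j -> E W (pi * c) k.
Proof.
move=> ->; rewrite /E mulf_eq0 (negbTE pi0) /=; have [c0|c0] := eqVneq c 0 => //=.
rewrite (vM hv) // vpi => /eqP ?; apply/eqP; lia.
Qed.

Lemma GS_shift W c j k : (j.+1 = k + e)%N -> G W c j -> S W (pi * c) k.
Proof.
move=> hj; rewrite /G /S mulf_eq0 (negbTE pi0) /=; have [c0|c0] := eqVneq c 0 => //=.
rewrite (vM hv) // vpi => ?; lia.
Qed.

End Weights.


Definition smin (s : seq int) : int := foldr Num.min (head 0 s) s.

Lemma foldr_min_le (s : seq int) d y : y \in d :: s -> foldr Num.min d s <= y.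
Proof.
elim: s y => [|a s IH] y /=; first by rewrite inE => /eqP ->.
have Hd := IH d; rewrite inE eqxx in Hd; have {}Hd := Hd isT.
rewrite !inE => /or3P [/eqP->|/eqP->|yin].
- by case: (min_cases a (foldr Num.min d s)) => [[-> ?]|[-> ?]] //; lia.
- by case: (min_cases a (foldr Num.min d s)) => [[-> ?]|[-> ?]] //.
- have := IH y; rewrite inE yin orbT => /(_ isT) ?.
  by case: (min_cases a (foldr Num.min d s)) => [[-> ?]|[-> ?]] //; lia.
Qed.

Lemma foldr_min_in (s : seq int) d : foldr Num.min d s \in d :: s.
Proof.
elim: s => [|a s IH] /=; first by rewrite inE.
case: (min_cases a (foldr Num.min d s)) => [[-> ?]|[-> ?]]; first by rewrite !inE eqxx orbT.
move: IH; rewrite !inE => /orP [->|->] //; by rewrite !orbT.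
Qed.

Lemma smin_le s y : y \in s -> smin s <= y.
Proof. by move=> ys; apply: foldr_min_le; rewrite inE ys orbT. Qed.

Lemma smin_in s : s != [::] -> smin s \in s.
Proof.
case: s => [//|a s] _; have := foldr_min_in (a :: s) a; rewrite /smin /= !inE.
by case/orP => [->|->] //; rewrite ?eqxx.
Qed.

Lemma mul_ge1 (e : nat) (t : int) : (0 < e)%N -> 0 < t -> 1 <= e%:Z * t.
Proof. nia. Qed.

Section Ext.
Variable K : fieldType.
Variable v : K -> int.
Hypothesis hv : is_dval v.
Variable e : nat.
Hypothesis he : (1 < e)%N.
Variable pi : K.
Hypothesis pi0 : pi != 0.
Hypothesis vpi : v pi = 1.

Definition hpol : {poly K} := 'X^e - pi%:P * ('X + 1).

Lemma size_lin : size (pi%:P * ('X + 1) : {poly K}) = 2%N.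
Proof. by rewrite size_Cmul // size_XaddC. Qed.

Lemma size_hpol : size hpol = e.+1.
Proof. rewrite /hpol size_polyDl ?size_polyXn // size_polyN size_lin; lia. Qed.

Lemma monic_hpol : hpol \is monic.
Proof. rewrite /hpol monicE lead_coefDl ?lead_coefXn // size_polyN size_lin size_polyXn; lia. Qed.

Lemma mk_monic_hpol : mk_monic hpol = hpol.
Proof. by rewrite /mk_monic size_hpol monic_hpol; have -> : (1 < e.+1)%N by lia. Qed.

Local Notation Q := {poly %/ hpol}.

Lemma size_Q (x : Q) : (size (x : {poly K}) <= e)%N.
Proof.
have H : size (mk_monic hpol) = e.+1 by rewrite mk_monic_hpol size_hpol.
rewrite -ltnS -H; exact: size_mk_monic.
Qed.

Lemma coef_Q_big (x : Q) i : (e <= i)%N -> (x : {poly K})`_i = 0.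
Proof. move=> ei; apply: nth_default; exact: leq_trans (size_Q x) ei. Qed.

Definition wts (x : Q) : seq int :=
  [seq (e%:Z * v ((x : {poly K})`_i) + i%:Z) | i <- iota 0 e & (x : {poly K})`_i != 0].

Definition wQ (x : Q) : int := smin (wts x).

Lemma wQ_le (x : Q) i : (i < e)%N -> (x : {poly K})`_i != 0 ->
  wQ x <= e%:Z * v ((x : {poly K})`_i) + i%:Z.
Proof.
move=> ie xi; apply: smin_le; apply: (map_f (fun i => e%:Z * v ((x : {poly K})`_i) + i%:Z)).
by rewrite mem_filter xi mem_iota /=; lia.
Qed.

Lemma Q_neq0 (x : Q) : x != 0 -> exists i, (i < e)%N /\ (x : {poly K})`_i != 0.
Proof.
move=> x0; have px0 : (x : {poly K}) != 0.
  by apply: contra x0 => /eqP H; apply/eqP; apply: val_inj.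
exists (size (x : {poly K})).-1; split; first by have := size_Q x; have := size_poly_gt0 (x : {poly K}); rewrite px0; lia.
by rewrite -lead_coefE lead_coef_eq0.
Qed.

Lemma wQ_attained (x : Q) : x != 0 -> exists i, [/\ (i < e)%N, (x : {poly K})`_i != 0 &
  wQ x = e%:Z * v ((x : {poly K})`_i) + i%:Z].
Proof.
move=> x0; have [j [je xj]] := Q_neq0 x0.
have : wts x != [::].
  apply/eqP => H; have : (e%:Z * v ((x : {poly K})`_j) + j%:Z) \in wts x.
    apply: (map_f (fun i => e%:Z * v ((x : {poly K})`_i) + i%:Z)).
    by rewrite mem_filter xj mem_iota /=; lia.
  by rewrite H.
move=> /smin_in /mapP [i]; rewrite mem_filter mem_iota => /andP [xi /andP [_ ie]] H.
by exists i; split => //; lia.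
Qed.

Local Notation G := (G v e).
Local Notation S := (S v e).
Local Notation E := (E v e).

Lemma wG (x : Q) i : G (wQ x) ((x : {poly K})`_i) i.
Proof.
rewrite /G; have [ie|ei] := ltnP i e.
- have [->|xi] := eqVneq ((x : {poly K})`_i) 0 => //=; exact: wQ_le.
- by rewrite (coef_Q_big x ei) eqxx.
Qed.

Lemma wE (x : Q) : x != 0 -> exists i0, E (wQ x) ((x : {poly K})`_i0) i0 /\
  (forall i, i != i0 -> S (wQ x) ((x : {poly K})`_i) i).
Proof.
move=> x0; have [i0 [i0e xi0 wi0]] := wQ_attained x0.
exists i0; split; first by rewrite /E xi0 wi0 eqxx.
move=> i ii0; rewrite /S; have [ie|ei] := ltnP i e; last by rewrite (coef_Q_big x ei) eqxx.
have [->|xi] := eqVneq ((x : {poly K})`_i) 0 => //=.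
have := wQ_le ie xi; rewrite le_eqVlt => /orP [/eqP H|//].
have : i0 = i by apply: (@modeq_uniq e (v (x : {poly K})`_i0) (v (x : {poly K})`_i) _ _ i0e ie); rewrite -wi0 H.
by move=> E0; rewrite E0 eqxx in ii0.
Qed.

Lemma w_ge (x : Q) W : x != 0 -> (forall i, G W ((x : {poly K})`_i) i) -> W <= wQ x.
Proof.
move=> x0 H; have [i [ie xi ->]] := wQ_attained x0.
by have := H i; rewrite /G (negbTE xi).
Qed.

Lemma w_le (x : Q) W i : E W ((x : {poly K})`_i) i -> wQ x <= W.
Proof.
rewrite /E => /andP [xi /eqP ->]; have [ie|ei] := ltnP i e; first exact: wQ_le.
by rewrite (coef_Q_big x ei) eqxx in xi.
Qed.

Let he0 : (0 < e)%N := ltnW he.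
Local Notation G_mul' := (G_mul hv he0 pi0 vpi).
Local Notation S_mulG' := (S_mulG hv he0 pi0 vpi).
Local Notation G_mulS' := (G_mulS hv he0 pi0 vpi).
Local Notation E_mul' := (E_mul hv he0 pi0 vpi).
Local Notation E_addS' := (E_addS hv he0 pi0 vpi).
Local Notation G_sum' := (G_sum hv he0 pi0 vpi).
Local Notation S_sum' := (S_sum hv he0 pi0 vpi).
Local Notation G_add' := (G_add hv he0 pi0 vpi).
Local Notation S_add' := (S_add hv he0 pi0 vpi).
Local Notation S_G' := (S_G he0 pi0 vpi).

Lemma gauss (P R : {poly K}) a b i0 j0 :
  (forall i, G a P`_i i) -> (forall i, i != i0 -> S a P`_i i) -> E a P`_i0 i0 ->
  (forall j, G b R`_j j) -> (forall j, j != j0 -> S b R`_j j) -> E b R`_j0 j0 ->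
  [/\ forall m, G (a + b) (P * R)`_m m,
      forall m, m != (i0 + j0)%N -> S (a + b) (P * R)`_m m &
      E (a + b) (P * R)`_(i0 + j0) (i0 + j0)].
Proof.
move=> GP SP EP GR SR ER; split.
- move=> m; rewrite coefM; apply: G_sum' => j _.
  have := G_mul' (GP j) (GR (m - j)%N); rewrite subnKC //; exact: ltnSE (ltn_ord j).
- move=> m mn; rewrite coefM; apply: S_sum' => j _.
  have jm : (j <= m)%N by exact: ltnSE (ltn_ord j).
  have [ji|ji] := eqVneq (j : nat) i0.
  + have : (m - j)%N != j0 by apply: contra mn => /eqP H; apply/eqP; rewrite -ji -H subnKC.
    move=> /SR H; have := G_mulS' (GP j) H; rewrite subnKC //.
  + have := S_mulG' (SP _ ji) (GR (m - j)%N); rewrite subnKC //.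
- have i0m : (i0 < (i0 + j0).+1)%N by lia.
  rewrite coefM (bigD1 (Ordinal i0m)) //=.
  apply: E_addS'; first by have := E_mul' EP ER; rewrite addKn.
  apply: S_sum' => j /= ji; have ji' : (j : nat) != i0 by apply: contra ji => /eqP H; apply/eqP; apply: val_inj.
  have := S_mulG' (SP _ ji') (GR (i0 + j0 - j)%N); rewrite subnKC //; exact: ltnSE (ltn_ord j).
Qed.

Local Notation G_shift' := (G_shift hv he0 pi0 vpi).
Local Notation S_shift' := (S_shift hv he0 pi0 vpi).
Local Notation E_shift' := (E_shift hv he0 pi0 vpi).
Local Notation GS_shift' := (GS_shift hv he0 pi0 vpi).

Lemma mulQ_poly (x y : Q) : ((x * y : Q) : {poly K}) =
  take_poly e ((x : {poly K}) * y) + pi%:P * ('X + 1) * drop_poly e ((x : {poly K}) * y).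
Proof.
rewrite poly_of_qpolyM [X in rmodp _ X]mk_monic_hpol.
set PQ := (x : {poly K}) * y.
have E1 : PQ = drop_poly e PQ * hpol + (take_poly e PQ + pi%:P * ('X + 1) * drop_poly e PQ).
  by rewrite -{1}(poly_take_drop e PQ) /hpol; ring.
rewrite {1}E1 rmodp_addl_mul_small ?monic_hpol // size_hpol ltnS.
rewrite (leq_trans (size_polyD _ _)) // geq_max size_take_poly /=.
rewrite (leq_trans (size_polyMleq _ _)) // size_lin size_drop_poly.
have := size_polyMleq (x : {poly K}) y; have := size_Q x; have := size_Q y.
rewrite -/PQ; lia.
Qed.

Lemma coef_mulQ (x y : Q) k : (k < e)%N ->
  ((x * y : Q) : {poly K})`_k =
  ((x : {poly K}) * y)`_k + pi * ((x : {poly K}) * y)`_(k + e) +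
  (if k == 0%N then 0 else pi * ((x : {poly K}) * y)`_(k.-1 + e)).
Proof.
move=> ke; rewrite mulQ_poly coefD coef_take_poly ke -mulrA coefCM mulrDl mul1r coefD coefXM.
rewrite !coef_drop_poly; case: eqP => _; first by rewrite add0r addr0.
by ring.
Qed.

Lemma E_lt (x : Q) W i : E W ((x : {poly K})`_i) i -> (i < e)%N.
Proof.
rewrite /E; have [//|ei] := ltnP i e.
by rewrite (coef_Q_big x ei) eqxx.
Qed.

Lemma E_addS_l W a b k : S W a k -> E W b k -> E W (a + b) k.
Proof. by move=> ha hb; rewrite addrC; apply: E_addS'. Qed.

Lemma wQ_mul (x y : Q) : x != 0 -> y != 0 -> x * y != 0 /\ wQ (x * y) = wQ x + wQ y.
Proof.
move=> x0 y0.
have [i0 [Ex Sx]] := wE x0; have [j0 [Ey Sy]] := wE y0.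
have i0e := E_lt Ex; have j0e := E_lt Ey.
have [GPQ SPQ EPQ] := gauss (wG x) Sx Ex (wG y) Sy Ey.
set W := wQ x + wQ y in GPQ SPQ EPQ *.
set PQ := (x : {poly K}) * y in GPQ SPQ EPQ.
have Gif : forall k, G W (if k == 0%N then 0 else pi * PQ`_(k.-1 + e)) k.
  move=> k; case: eqP => [_|k0]; first exact: G0.
  apply: S_G'; apply: (GS_shift' (j := (k.-1 + e)%N)); last exact: GPQ; lia.
have Sif : forall k, S W (if k == 0%N then 0 else pi * PQ`_(k.-1 + e)) k.
  move=> k; case: eqP => [_|k0]; first exact: S0.
  apply: (GS_shift' (j := (k.-1 + e)%N)); last exact: GPQ; lia.
have GR : forall k, G W ((x * y : Q) : {poly K})`_k k.
  move=> k; have [ke|ek] := ltnP k e; last by rewrite (coef_Q_big (x * y) ek); exact: G0.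
  rewrite coef_mulQ //; apply: G_add'; last exact: Gif.
  apply: G_add'; first exact: GPQ.
  apply: (G_shift' (j := (k + e)%N)) => //; exact: GPQ.
have [k0 ER] : exists k0, E W ((x * y : Q) : {poly K})`_k0 k0.
  have [m0e|m0e] := ltnP (i0 + j0)%N e.
  - exists (i0 + j0)%N; rewrite coef_mulQ //; apply: E_addS'; last exact: Sif.
    apply: E_addS' => //; apply: (S_shift' (j := (i0 + j0 + e)%N)) => //.
    apply: SPQ; lia.
  - exists (i0 + j0 - e)%N; rewrite coef_mulQ; last lia.
    apply: E_addS'; last exact: Sif.
    apply: E_addS_l; first by apply: SPQ; lia.
    rewrite subnK //; apply: (E_shift' (j := (i0 + j0)%N)); [lia | exact: EPQ].
have xy0 : x * y != 0.
  apply/negP => /eqP H; move: ER; rewrite /E H.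
  by rewrite (_ : ((0 : Q) : {poly K}) = 0) // coef0 eqxx.
split => //; apply/eqP; rewrite eq_le; apply/andP; split; first exact: (w_le ER).
exact: w_ge.
Qed.

Lemma G_mono W W' c k : W <= W' -> G W' c k -> G W c k.
Proof. rewrite /G; case: (c == 0) => //= ??; lia. Qed.

Lemma wQ_add (x y : Q) : x != 0 -> y != 0 -> x + y != 0 ->
  Num.min (wQ x) (wQ y) <= wQ (x + y).
Proof.
move=> x0 y0 xy0; apply: w_ge => // i.
rewrite poly_of_qpolyD coefD; apply: G_add'.
- by apply: (G_mono _ (wG x i)); case: (min_cases (wQ x) (wQ y)) => [[-> ?]|[-> ?]]; lia.
- by apply: (G_mono _ (wG y i)); case: (min_cases (wQ x) (wQ y)) => [[-> ?]|[-> ?]]; lia.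
Qed.

Lemma qX_poly : ('qX : Q) = 'X :> {poly K}.
Proof. by apply: qpolyXE; [rewrite size_hpol; lia | exact: monic_hpol]. Qed.

Lemma v1' : v 1 = 0. Proof. exact: v1 hv. Qed.

Lemma wQ_qX : wQ 'qX = 1.
Proof.
have EX : E 1 (('qX : Q) : {poly K})`_1 1.
  by rewrite qX_poly coefX /E oner_neq0 v1' mulr0 add0r eqxx.
have qX0 : ('qX : Q) != 0.
  apply/negP => /eqP H; move: EX; rewrite H /E.
  by rewrite (_ : ((0 : Q) : {poly K}) = 0) // coef0 eqxx.
apply/eqP; rewrite eq_le; apply/andP; split; first exact: (w_le EX).
apply: w_ge => // i; rewrite qX_poly coefX /G; have [->|i1] := eqVneq i 1%N.
  by rewrite /= oner_eq0 v1' /=; lia.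
by rewrite eqxx.
Qed.



Lemma hpol_irr : irreducible_poly hpol.
Proof.
split; first by rewrite size_hpol; lia.
move=> q sq qh.
have hp0 : hpol != 0 by rewrite -size_poly_gt0 size_hpol.
have q0 : q != 0 by apply: contra hp0 => /eqP q0; move: qh; rewrite q0 dvd0p.
have [/eqP eqs|neqs] := eqVneq (size q) (size hpol); first by rewrite -dvdp_size_eqp.
exfalso.
have sqh : (size q <= size hpol)%N by exact: dvdp_leq.
set r := hpol %/ q.
have hrq : r * q = hpol by exact: divpK.
have r0 : r != 0 by apply: contra hp0 => /eqP r0; rewrite -hrq r0 mul0r.
have sz := size_mul r0 q0; rewrite hrq in sz.
have sq2 : (1 < size q)%N.
  have : size q != 0%N by rewrite size_poly_eq0.
  move: sq; lia.
have szh := size_hpol.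
have sz2 : (size r + size q = (size hpol).+1)%N by rewrite sz prednK //; lia.
have sr2 : (1 < size r)%N by move: neqs; lia.
have sqs : (size q < size (mk_monic hpol))%N by rewrite mk_monic_hpol; lia.
have srs : (size r < size (mk_monic hpol))%N by rewrite mk_monic_hpol; lia.
have xq0 : in_qpoly hpol q != 0.
  apply/negP => /eqP H; have := in_qpoly_small sqs; rewrite H => H'.
  by move: q0; rewrite -H' eqxx.
have xr0 : in_qpoly hpol r != 0.
  apply/negP => /eqP H; have := in_qpoly_small srs; rewrite H => H'.
  by move: r0; rewrite -H' eqxx.
have [H _] := wQ_mul xr0 xq0; move: H; rewrite -in_qpolyM hrq; apply/negP/negPn.
apply/eqP; apply: val_inj => /=; rewrite [X in rmodp _ X]mk_monic_hpol rmodpp //; exact: monic_hpol.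
Qed.

Lemma wQ_zero (x : Q) : x = 0 -> wQ x = 0.
Proof.
move=> ->; have H : forall i, ((0 : Q) : {poly K})`_i = 0 by move=> i; rewrite coef0.
rewrite /wQ /wts; elim: (iota 0 e) => //= a l; by rewrite H eqxx.
Qed.

Definition hI : monic_irreducible_poly hpol := (hpol_irr, monic_hpol).

Definition L : fieldExtType K := {poly %/ hpol with hI}.

Definition wL (x : L) : int := wQ x.

Lemma dval_wQ : is_dval wL.
Proof.
split.
- by move=> x y x0 y0; case: (wQ_mul x0 y0).
- exact: wQ_add.
- exists 'qX; split; last exact: wQ_qX.
  apply/negP => /eqP H; have := wQ_zero H; rewrite wQ_qX.
  done.
Qed.

Lemma dim_L : \dim (fullv : {vspace L}) = e.
Proof. by rewrite dim_polyn mk_monic_hpol size_hpol. Qed.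

Lemma oneQ : ((1 : Q) : {poly K}) = 1.
Proof. by rewrite (qpolyCE hpol 1) polyC1. Qed.

Lemma algQ (c : K) : (((c%:A : L) : Q) : {poly K}) = c%:P.
Proof.
have -> : ((c%:A : L) : Q) = c *: (1 : Q) by [].
by rewrite poly_of_qpolyZ oneQ alg_polyC.
Qed.

Lemma w_alg (c : K) : c != 0 -> wQ (c%:A : L) = e%:Z * v c.
Proof.
move=> c0.
have EX : E (e%:Z * v c) ((((c%:A : L) : Q) : {poly K})`_0) 0.
  by rewrite algQ coefC eqxx /E c0 addr0 eqxx.
have x0 : ((c%:A : L) : Q) != 0.
  apply/negP => /eqP H; move: EX; rewrite H /E.
  by rewrite (_ : ((0 : Q) : {poly K}) = 0) // coef0 eqxx.
apply/eqP; rewrite eq_le; apply/andP; split; first exact: (w_le EX).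
apply: w_ge => // i; rewrite algQ coefC /G; case: (eqVneq i 0%N) => [->|i0] /=.
  by rewrite (negbTE c0) /=; lia.
by rewrite eqxx.
Qed.

Lemma in_O_alg (c : K) : in_O v c -> in_O wL (c%:A : L).
Proof.
rewrite /in_O /vge; have [->|c0] := eqVneq c 0; first by rewrite scale0r eqxx.
rewrite /= /wL w_alg // => H; apply/orP; right; nia.
Qed.

Lemma qX_ne0 : ('qX : L) != 0.
Proof.
apply/negP => /eqP H; have := wQ_zero H.
by rewrite (_ : wQ ('qX : L) = 1) //; exact: wQ_qX.
Qed.

Lemma qXp_poly : ((('qX + 1 : L) : Q) : {poly K}) = 'X + 1.
Proof. by rewrite poly_of_qpolyD qX_poly oneQ. Qed.

Lemma w_a1 : ('qX + 1 : L) != 0 /\ wQ ('qX + 1 : L) = 0.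
Proof.
have EX : E 0 (((('qX + 1 : L) : Q) : {poly K})`_0) 0.
  by rewrite qXp_poly coefD coefX coef1 /= add0r /E oner_neq0 v1' mulr0 eqxx.
have x0 : (('qX + 1 : L) : Q) != 0.
  apply/negP => /eqP H; move: EX; rewrite H /E.
  by rewrite (_ : ((0 : Q) : {poly K}) = 0) // coef0 eqxx.
split => //.
apply/eqP; rewrite eq_le; apply/andP; split; first exact: (w_le EX).
apply: w_ge => // i; rewrite qXp_poly coefD coefX coef1 /G.
case: (eqVneq i 0%N) => [->|i0] /=; first by rewrite add0r oner_eq0 v1' /=.
case: (eqVneq i 1%N) => [->|i1] /=; first by rewrite addr0 oner_eq0 v1' /=.
by rewrite addr0 eqxx.
Qed.

Lemma a_pow : ('qX : L) ^+ e = pi%:A * ('qX + 1).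
Proof.
rewrite mulr_algl; apply: val_inj.
change (((('qX : Q) ^+ e : Q) : {poly K}) = ((pi *: ('qX + 1 : Q) : Q) : {poly K})).
rewrite poly_of_qpolyX qX_poly [X in rmodp _ X]mk_monic_hpol poly_of_qpolyZ poly_of_qpolyD qX_poly oneQ.
have E1 : 'X^e = 1 * hpol + pi *: ('X + 1 : {poly K}) by rewrite /hpol mul1r -mul_polyC; ring.
rewrite {1}E1 rmodp_addl_mul_small ?monic_hpol // size_hpol -mul_polyC size_lin; lia.
Qed.

Variables p n : nat.
Hypothesis hp : prime p.
Hypothesis hep : e = (p * n)%N.
Hypothesis hvp : 0 < v p%:R.
Hypothesis hpK : p%:R != 0 :> K.

Let hw := dval_wQ.

Lemma natL m : (m%:R : L) = (m%:R : K)%:A.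
Proof. by rewrite -in_algE rmorph_nat. Qed.

Lemma w_natp : (p%:R : L) != 0 /\ 2 <= wL (p%:R : L).
Proof.
rewrite natL; split; first by rewrite -in_algE fmorph_eq0.
rewrite /wL w_alg //; nia.
Qed.

Lemma vtrans k (a b c : L) : vge wL k (a - b) -> vge wL k (b - c) -> vge wL k (a - c).
Proof. move=> h1 h2; have := vgeD hw h1 h2; by rewrite addrA subrK. Qed.

Lemma vsym k (a b : L) : vge wL k (a - b) -> vge wL k (b - a).
Proof. by move=> h; rewrite -opprB; apply: vgeN. Qed.

Lemma vmulr k (a b c : L) : vge wL k (a - b) -> in_O wL c -> vge wL k (a * c - b * c).
Proof. move=> h hc; rewrite -mulrBl; have := vgeM hw h hc; by rewrite addr0. Qed.

Lemma vmull k (a b c : L) : vge wL k (a - b) -> in_O wL c -> vge wL k (c * a - c * b).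
Proof. by move=> h hc; rewrite ![c * _]mulrC; apply: vmulr. Qed.

Lemma const_part (d : L) : in_O wL d ->
  in_O v (((d : Q) : {poly K})`_0) /\
  vge wL 1 (d - ((((d : Q) : {poly K})`_0)%:A)).
Proof.
move=> dO.
have [->|d0] := eqVneq d 0.
  rewrite (_ : (((0 : L) : Q) : {poly K}) = 0) // coef0 scale0r subrr; split; [exact: vge0 | exact: vge0].
have wd : 0 <= wQ d by move: dO; rewrite /in_O /vge (negbTE d0).
have Gd := wG (d : Q).
set c0 := ((d : Q) : {poly K})`_0.
split.
  rewrite /in_O /vge; have := Gd 0%N; rewrite /G -/c0; case: (c0 == 0) => //= ?; nia.
set x := d - c0%:A.
rewrite /vge; have [//|x0] := eqVneq x 0; rewrite /=.
apply: (w_ge (x := (x : Q))) => // i.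
have -> : (((x : L) : Q) : {poly K}) = ((d : Q) : {poly K}) - c0%:P.
  by rewrite -(algQ c0).
rewrite coefB coefC; case: (eqVneq i 0%N) => [->|i0] /=; first by rewrite -/c0 subrr; exact: G0.
rewrite subr0; have [ei|ie] := leqP e i; first by rewrite (coef_Q_big (d : Q) ei); exact: G0.
have := Gd i; rewrite /G; case: (_ == 0) => //= H.
move: H; set t := v _ => H.
have [t0|t0] := leP 0 t; first nia.
have : e%:Z * t <= - e%:Z by nia.
lia.
Qed.

Lemma binom (d0 x : L) : in_O wL d0 -> vge wL 1 x -> vge wL 2 ((d0 + x) ^+ p - d0 ^+ p).
Proof.
move=> hd hx.
have p1 : (1 < p)%N := prime_gt1 hp.
rewrite exprDn big_ord_recl /= subn0 expr0 mulr1 bin0 mulr1n [d0 ^+ p + _]addrC addrK.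
apply: (vge_sum hw) => i _.
have xO : forall j, vge wL 0 (x ^+ j).
  by move=> j; apply: (vge_le (k2 := 1 * j%:Z)); [lia | apply: (vgeX hw) => //].
have dO : forall j, vge wL 0 (d0 ^+ j).
  by move=> j; have := vgeX hw j hd (lexx 0); rewrite mul0r.
have [ip|ip] := ltnP (bump 0 i) p.
- have dv : (p %| 'C(p, bump 0 i))%N by apply: prime_dvd_bin => //.
  have [_ w2] := w_natp.
  have hpv : vge wL 2 (p%:R : L) by rewrite /vge w2 orbT.
  have := vgeM hw (vgeM hw (dO (p - bump 0 i)%N) (xO (bump 0 i))) (vgeM hw (vge_nat hw ('C(p, bump 0 i) %/ p)) hpv).
  by rewrite !add0r -natrM divnK // mulr_natr.
- have ie : bump 0 i = p by have := ltn_ord i; move: ip; rewrite /bump add1n; lia.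
  rewrite ie subnn expr0 mul1r binn mulr1n.
  apply: (vge_le (k2 := 1 * p%:Z)); first lia.
  by apply: (vgeX hw) => //.
Qed.

Lemma z_bad (c y : K) : y != 0 -> v y = 0 -> ~~ vge wL 2 (c%:A - y%:A * ('qX + 1) : L).
Proof.
move=> y0 vy.
have zp : ((((c%:A - y%:A * ('qX + 1) : L) : Q)) : {poly K}) = c%:P - y *: ('X + 1).
  rewrite mulr_algl.
  change ((((c%:A : L) : Q) : {poly K}) - ((y *: ('qX + 1 : Q) : Q) : {poly K}) = c%:P - y *: ('X + 1)).
  by rewrite algQ poly_of_qpolyZ poly_of_qpolyD qX_poly oneQ.
have EX : E 1 (((((c%:A - y%:A * ('qX + 1) : L) : Q)) : {poly K})`_1) 1.
  rewrite zp coefB coefC coefZ coefD coefX coef1 /= sub0r addr0 mulr1 /E oppr_eq0 y0 /=.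
  by rewrite (vN hv) // vy mulr0 add0r.
have z0 : ((c%:A - y%:A * ('qX + 1) : L) : Q) != 0.
  apply/negP => /eqP H; move: EX; rewrite H /E.
  by rewrite (_ : ((0 : Q) : {poly K}) = 0) // coef0 eqxx.
have := w_le EX; rewrite /vge (negbTE z0) /= /wL => ?; apply/negP; lia.
Qed.

Lemma no_restrict (ac : nat -> L -> L) : compatible_ac wL ac -> ~ restricts v wL ac.
Proof.
move=> [hac _] hres.
have p0 : (0 < p)%N := prime_gt0 hp.
have p1 : (1 < p)%N := prime_gt1 hp.
have [ac_O ac_inv ac_mul ac_unit ac_0] := hac p p0.
have [pn0 wp2] := w_natp.
have weak : forall k a b, k <= 2 -> cong wL p a b -> vge wL k (a - b).
  by move=> k a b k2 H; apply: (vge_le (k2 := wL p%:R + 1)); [lia | exact: H].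
have a0 := qX_ne0.
set a := ('qX : L) in a0 *.
set be := a ^+ n.
have be0 : be != 0 by rewrite expf_neq0.
set c := ac p be.
have P1 : forall k, vge wL 2 (ac p (be ^+ k.+1) - c ^+ k.+1).
  elim => [|k IH]; first by rewrite !expr1 subrr; exact: vge0.
  rewrite exprS [c ^+ _.+2]exprS; apply: (vtrans (b := c * ac p (be ^+ k.+1))).
    by apply: weak => //; apply: ac_mul => //; rewrite expf_neq0.
  by apply: vmull => //; exact: ac_O.
have P2 : be ^+ p = pi%:A * (a + 1) by rewrite -exprM mulnC -hep a_pow.
have piA0 : (pi%:A : L) != 0 by rewrite -in_algE fmorph_eq0.
have [a10 wa1] := w_a1.
have [y [yO hy]] := hres p p0 pi.
have [y0 vy] : y != 0 /\ v y = 0.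
  have [u [uO hu]] := ac_inv _ piA0.
  have h1 : vge wL 1 (y%:A * u - 1).
    apply: (vtrans (b := ac p pi%:A * u)); last by apply: weak.
    by apply: vsym; apply: vmulr => //; apply: weak.
  have [yz|yn0] := eqVneq y 0.
    exfalso; move: h1; rewrite yz scale0r mul0r sub0r /vge oppr_eq0 oner_eq0 /= (vN hw) ?oner_eq0 //.
    by have := v1 hw; rewrite /wL => ->.
  split => //.
  have vy0 : 0 <= v y by move: yO; rewrite /in_O /vge (negbTE yn0).
  have [//|vpos] := eqVneq (v y) 0; exfalso.
  have hyA : vge wL 1 (y%:A : L).
    rewrite /vge /wL w_alg //; apply/orP; right.
    by apply: mul_ge1 => //; rewrite lt_neqAle eq_sym vpos vy0.
  have h2 := vgeM hw hyA uO; rewrite addr0 in h2.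
  have := vgeB hw h2 h1; rewrite opprB addrC subrK.
  by rewrite /vge oner_eq0 orFb (v1 hw) ler10.
have yAO : in_O wL (y%:A : L) by apply: in_O_alg.
have C1 : vge wL 2 (c ^+ p - y%:A * (a + 1)).
  apply: (vtrans (b := ac p (be ^+ p))).
    by apply: vsym; have := P1 p.-1; rewrite prednK.
  rewrite P2; apply: (vtrans (b := ac p pi%:A * ac p (a + 1))).
    by apply: weak => //; apply: ac_mul.
  apply: (vtrans (b := y%:A * ac p (a + 1))).
    by apply: vmulr; [exact: weak | exact: ac_O].
  by apply: vmull => //; apply: weak => //; apply: ac_unit.
have [d0O hx] := const_part (ac_O be).
set d0 := (((c : L) : Q) : {poly K})`_0 in d0O hx.
have B := binom (in_O_alg d0O) hx.
rewrite [_ + (_ - _)]addrC subrK in B.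
have C2 : vge wL 2 ((d0 ^+ p)%:A - y%:A * (a + 1)).
  have -> : ((d0 ^+ p)%:A : L) = (d0%:A : L) ^+ p by rewrite -!in_algE rmorphXn.
  apply: (vtrans (b := c ^+ p)) => //.
  exact: vsym.
by move: (z_bad (d0 ^+ p) y0 vy); rewrite C2.
Qed.

End Ext.


Theorem proposition3p3 (p : nat) (K : fieldType) (v : K -> int) :
  padic_field p v ->
  forall n : nat, (0 < n)%N ->
  exists (L : fieldExtType K) (w : L -> int),
    [/\ \dim (fullv : {vspace L}) = (p * n)%N,
        is_dval w,
        (forall x : K, x != 0 -> w (x%:A) = (p * n)%:Z * v x) &
        (forall ac : nat -> L -> L, compatible_ac w ac -> ~ restricts v w ac)].
Proof.
move=> [hp hv _ [hchar hvp] _] n n0.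
have [pi [pi0 vpi]] : exists pi : K, pi != 0 /\ v pi = 1 by case: hv.
have p1 : (1 < p)%N := prime_gt1 hp.
have he : (1 < p * n)%N by rewrite (leq_trans p1) // leq_pmulr.
exists (L hv he pi0 vpi), (@wL K v hv (p * n)%N he pi pi0 vpi).
split.
- exact: dim_L.
- exact: dval_wQ.
- by move=> x x0; rewrite /wL w_alg.
- move=> ac hac; apply: (@no_restrict K v hv (p * n)%N he pi pi0 vpi p n hp erefl hvp) => //.
  exact: hchar (prime_gt0 hp).
Qed.
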